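(* Let $j,a\in\mathbb{N}$, $r\in\mathbb{N}_0$, and $p$ a prime. Then \[c_j^{(r)}(p^a)=\binom{a+r-1}{j+r-1}.\]
   Context: For $j,n\in\mathbb{N}$, $c_j(n)$ is the number of ordered $j$-tuples of integers each $\ge 2$ with product $n$. The associated divisor functions are defined by $c_j^{(0)}=c_j$ and $c_j^{(r)}(n)=\sum_{m\mid n}c_j^{(r-1)}(m)$ for $r,n\in\mathbb{N}$. Binomial coefficients $\binom{N}{K}$ with $K>N\ge 0$ are $0$. *)

(* Defs.v *)
From mathcomp Require Import all_boot.
Set Implicit Arguments. Unset Strict Implicit. Unset Printing Implicit Defensive.

(* Each entry divides n, so for n >= 1 entries lie in [2, n]; we
   enumerate tuples with entries in 'I_(n.+1) (i.e. values 0..n).  For n >= 1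
   this is exactly the set of all such tuples. *)
Definition c (j n : nat) : nat :=
  #|[set t : {ffun 'I_j -> 'I_n.+1} |
      [forall i, 2 <= t i] && (\prod_(i < j) (t i : nat) == n)]|.

Fixpoint cr (j r n : nat) : nat :=
  match r with
  | 0 => c j n
  | r'.+1 => \sum_(m <- divisors n) cr j r' m
  end.

(* Main.v *)
Require Import Defs.
From mathcomp Require Import all_boot.
From mathcomp Require Import zify.

Definition A N j n := [set t : {ffun 'I_j -> 'I_N.+1} |
      [forall i, 2 <= t i] && (\prod_(i < j) (t i : nat) == n)].

Lemma A0 N n : #|A N 0 n| = (n == 1).
Proof.
have -> : A N 0 n = if n == 1 then setT else set0.
  have F : forall t : {ffun 'I_0 -> 'I_N.+1}, [forall i, 2 <= t i] by move=> t; apply/forallP => [[]].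
  apply/setP => t; case: ifP => h; rewrite !inE big_ord0 F /= eq_sym //.
by case: (n == 1); rewrite ?cardsT ?cards0 // card_ffun !card_ord.
Qed.

Definition join N j (u : 'I_N.+1 * {ffun 'I_j -> 'I_N.+1}) : {ffun 'I_j.+1 -> 'I_N.+1} :=
  [ffun i => if unlift ord0 i is Some k then u.2 k else u.1].
Definition split N j (f : {ffun 'I_j.+1 -> 'I_N.+1}) :=
  (f ord0, [ffun k => f (lift ord0 k)]).

Arguments join {N j}.
Arguments split {N j}.

Lemma splitK N j : cancel (@split N j) (@join N j).
Proof.
move=> f; apply/ffunP => i; rewrite ffunE.
by case: unliftP => [k ->|->] //=; rewrite ffunE.
Qed.

Lemma joinK N j : cancel (@join N j) (@split N j).
Proof.
case=> x g; rewrite /split /= ffunE unlift_none; congr pair.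
by apply/ffunP=> k; rewrite !ffunE liftK.
Qed.

Lemma memA N j n x g : 0 < n ->
  (join (x, g) \in A N j.+1 n) = ((2 <= x) && (x %| n)) && (g \in A N j (n %/ x)).
Proof.
move=> n0; rewrite !inE big_ord_recl /= ffunE unlift_none.
under eq_bigr do rewrite ffunE liftK.
have -> : [forall i, 2 <= join (x,g) i] = (2 <= x) && [forall k, 2 <= g k].
  apply/forallP/andP => [H|[H1 /forallP H2] i].
    split; first by have := H ord0; rewrite ffunE unlift_none.
    by apply/forallP => k; have := H (lift ord0 k); rewrite ffunE liftK.
  by rewrite ffunE; case: unliftP => [k _|_].
case x2: (2 <= x) => //=.
case: (boolP (x %| n)) => dx /=.
  have -> : (x * \prod_(i < j) (g i : nat) == n) = (\prod_(i < j) (g i : nat) == n %/ x).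
    by rewrite -{1}(divnK dx) mulnC eqn_pmul2r // ltnW.
  by [].
apply/negbTE/negP => /andP [_ /eqP E]; apply: (negP dx); by rewrite -E dvdn_mulr.
Qed.

Lemma peel N j n : 0 < n ->
  #|A N j.+1 n| = \sum_(x < N.+1 | (2 <= x) && (x %| n)) #|A N j (n %/ x)|.
Proof.
move=> n0.
rewrite -sum1_card (reindex (@join N j)); last first.
  by exists (@split N j) => u _; [apply: joinK | apply: splitK].
transitivity (\sum_(x : 'I_N.+1) \sum_(g : {ffun 'I_j -> 'I_N.+1})
    (if join (x,g) \in A N j.+1 n then 1 else 0)).
  by rewrite pair_big big_mkcond /=; apply: congr_big => // -[x g].
rewrite [RHS]big_mkcond /=; apply: eq_bigr => x _.
under eq_bigr do rewrite memA //.
case: ifP => cx /=.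
  by rewrite -sum1_card [RHS]big_mkcond.
by rewrite big1.
Qed.

Lemma sum_pp p (G : nat -> nat) N b : prime p -> p ^ b <= N ->
  \sum_(x < N.+1 | (2 <= x) && (x %| p ^ b)) G (p ^ b %/ x) = \sum_(m < b) G (p ^ m).
Proof.
move=> pp bN.
have p1 := prime_gt1 pp; have p0 := prime_gt0 pp.
rewrite -(big_mkord (fun x => (2 <= x) && (x %| p^b)) (fun x => G (p^b %/ x))).
rewrite -big_filter (perm_big [seq p ^ (b - m) | m <- iota 0 b]); last first.
  apply: uniq_perm.
  - by rewrite filter_uniq // iota_uniq.
  - rewrite map_inj_in_uniq ?iota_uniq // => m1 m2; rewrite !mem_iota /= => h1 h2.
    move/(expnI p1); lia.
  move=> x; rewrite mem_filter mem_index_iota /=; apply/idP/mapP.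
    case/andP => /andP [x2 /(dvdn_pfactor _ _ pp) [k kb xk]] _.
    exists (b - k); last by rewrite subKn.
    rewrite mem_iota /=; case: k kb xk => [|k] kb xk; first by rewrite xk expn0 in x2.
    lia.
  case=> m; rewrite mem_iota /= => mb ->.
  have pb : p <= p ^ (b - m) by rewrite -{1}(expn1 p) leq_pexp2l //; lia.
  rewrite (leq_trans p1 pb) dvdn_exp2l ?leq_subr //=.
  by rewrite ltnS (leq_trans _ bN) // leq_pexp2l // leq_subr.
rewrite big_map -(big_mkord xpredT (fun m => G (p ^ m))) /index_iota subn0.
apply: eq_big_seq => m; rewrite mem_iota add0n => /andP[_ mb].
congr G; rewrite -{1}(subnK (ltnW mb)) expnD mulKn //; by rewrite expn_gt0 p0.
Qed.

Lemma hockey r j b : \sum_(k < b) 'C(k + r, r + j) = 'C(b + r, r + j.+1).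
Proof.
elim: b => [|b IH]; first by rewrite big_ord0 bin_small // addnS ltnS leq_addr.
by rewrite big_ord_recr /= IH addSn addnS binS -addnS.
Qed.

Lemma countA p N j b : prime p -> p ^ b <= N ->
  #|A N j (p ^ b)| = if j is j'.+1 then (if b is b'.+1 then 'C(b', j') else 0) else (b == 0).
Proof.
move=> pp; have p1 := prime_gt1 pp; have p0 := prime_gt0 pp.
elim: j b => [|j IH] b bN.
  by rewrite A0 -(expn0 p) eqn_exp2l.
rewrite peel ?expn_gt0 ?p0 // (@sum_pp p (fun n => #|A N j n|)) //.
rewrite (eq_bigr (fun m : 'I_b => ((if j is j'.+1 then (if (m : nat) is m'.+1 then 'C(m', j') else 0) else nat_of_bool ((m : nat) == 0)) : nat))); last first.
  move=> m _; rewrite IH // (leq_trans _ bN) // leq_pexp2l // ltnW //.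
case: j {IH} => [|j]; case: b {bN} => [|b]; rewrite ?big_ord0 // big_ord_recl /=.
  by rewrite big1 // bin0.
rewrite add0n; have := hockey 0 j b; rewrite add0n addn0 => <-.
by apply: eq_bigr => i _; rewrite addn0.
Qed.

Lemma divpp p b : prime p -> perm_eq (divisors (p ^ b)) [seq p ^ k | k <- iota 0 b.+1].
Proof.
move=> pp; have p1 := prime_gt1 pp; have p0 := prime_gt0 pp.
apply: uniq_perm; first exact: divisors_uniq.
  by rewrite map_inj_uniq ?iota_uniq //; exact: expnI.
move=> x; rewrite -dvdn_divisors ?expn_gt0 ?p0 //; apply/idP/mapP.
  by case/(dvdn_pfactor _ _ pp) => k kb ->; exists k; rewrite // mem_iota.
by case=> k; rewrite mem_iota /= => kb ->; rewrite dvdn_exp2l.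
Qed.

Lemma claim j r p b : prime p ->
  cr j.+1 r (p ^ b) = if b is b'.+1 then 'C(b' + r, j + r) else 0.
Proof.
move=> pp.
elim: r b => [|r IH] b.
  rewrite /= (_ : c j.+1 (p ^ b) = #|A (p ^ b) j.+1 (p ^ b)|) // (@countA p (p ^ b) j.+1 b pp) //; case: b => // b; by rewrite !addn0.
rewrite /= (perm_big _ (@divpp p b pp)) big_map.
have -> : iota 0 b.+1 = index_iota 0 b.+1 by rewrite /index_iota subn0.
rewrite big_mkord (eq_bigr (fun k : 'I_b.+1 => if (k : nat) is k'.+1 then 'C(k' + r, j + r) else 0)); last by move=> k _; rewrite IH.
rewrite big_ord_recl /= add0n.
case: b => [|b]; first by rewrite big_ord0.
rewrite (eq_bigr (fun i : 'I_b.+1 => 'C(i + r, r + j))); last by move=> i _; rewrite addnC [r + j]addnC.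
rewrite hockey; congr 'C(_, _); lia.
Qed.

Theorem lemma15 (j a r p : nat) :
  0 < j -> 0 < a -> prime p ->
  cr j r (p ^ a) = 'C(a + r - 1, j + r - 1).
Proof.
case: j => [|j] // _; case: a => [|a] // _ pp.
rewrite claim //; congr 'C(_, _); lia.
Qed.
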